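(* Let $v$ be a quadratic Hamiltonian vector field on $\mathbb{C}^2$ with four distinct non-degenerate singular points $p_1,\dots,p_4$. Assume its spectrum is not exceptional, i.e. $\det Dv(p_j)+\det Dv(p_k)\neq0$ for all $j\ne k$. Then $v$ has exactly one twin vector field among all quadratic vector fields, and this twin is $-v$.
   Context: A quadratic vector field is $v=P\,\partial_x+Q\,\partial_y$ with $\deg P,\deg Q\le2$, and it is Hamiltonian if $P_x+Q_y\equiv0$. $Dv$ is the Jacobian matrix of $(P,Q)$. A singular point $p$ is non-degenerate if $\det Dv(p)\ne0$. Two vector fields $v_1,v_2$ with isolated singularities are twin vector fields if $v_1\ne v_2$, they have the same singular set, and at each common singular point $p$ the matrices $Dv_1(p)$ and $Dv_2(p)$ have the same trace and the same determinant. *)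

(* Defs.v *)
(* The complex plane C^2 is modelled over an arbitrary
   numClosedFieldType F (algebraically closed field of characteristic 0
   with a conjugation/norm; e.g. algC; C itself is such a field). *)
From HB Require Import structures.
From mathcomp Require Import all_boot all_order all_algebra.
Set Implicit Arguments. Unset Strict Implicit. Unset Printing Implicit Defensive.
Import Order.TTheory GRing.Theory Num.Theory.
Local Open Scope ring_scope.

Record qpoly (F : Type) := QPoly {
  c00 : F; c10 : F; c01 : F; c20 : F; c11 : F; c02 : F }.

Section QPoly.
Variable F : nzRingType.

Definition qeval (p : qpoly F) (x y : F) : F :=
  c00 p + c10 p * x + c01 p * y + c20 p * x ^+ 2 + c11 p * x * y + c02 p * y ^+ 2.

Definition qdx (p : qpoly F) (x y : F) : F :=
  c10 p + 2%:R * c20 p * x + c11 p * y.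
Definition qdy (p : qpoly F) (x y : F) : F :=
  c01 p + c11 p * x + 2%:R * c02 p * y.

Definition qopp (p : qpoly F) : qpoly F :=
  QPoly (- c00 p) (- c10 p) (- c01 p) (- c20 p) (- c11 p) (- c02 p).
End QPoly.

Record qvf (F : Type) := QVF { vP : qpoly F; vQ : qpoly F }.

Section QVF.
Variable F : nzRingType.

Definition qvf_opp (v : qvf F) : qvf F := QVF (qopp (vP v)) (qopp (vQ v)).

Definition hamiltonian (v : qvf F) : Prop :=
  forall x y : F, qdx (vP v) x y + qdy (vQ v) x y = 0.

Definition sing_pt (v : qvf F) (p : F * F) : Prop :=
  qeval (vP v) p.1 p.2 = 0 /\ qeval (vQ v) p.1 p.2 = 0.

Definition vjac (v : qvf F) (p : F * F) : 'M[F]_2 :=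
  \matrix_(i < 2, j < 2)
    (let f := if i == 0 :> nat then vP v else vQ v in
     if j == 0 :> nat then qdx f p.1 p.2 else qdy f p.1 p.2).

Definition nondeg_pt (v : qvf F) (p : F * F) : Prop :=
  \det (vjac v p) != 0.

(* isolated singularities: for (complex) polynomial vector fields in the plane,
   the sing_pt set is an algebraic set, whose points are all isolated iff it
   is finite. *)
Definition isolated_sing (v : qvf F) : Prop :=
  exists s : seq (F * F), forall p, sing_pt v p <-> p \in s.

Definition twin_vf (v1 v2 : qvf F) : Prop :=
  [/\ v1 <> v2, isolated_sing v1, isolated_sing v2,
      (forall p, sing_pt v1 p <-> sing_pt v2 p) &
      (forall p, sing_pt v1 p ->
         \tr (vjac v1 p) = \tr (vjac v2 p) /\ \det (vjac v1 p) = \det (vjac v2 p))].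
End QVF.

(* Main.v *)
Require Import Defs.
From HB Require Import structures.
From mathcomp Require Import all_boot all_order all_algebra.
From mathcomp Require Import ring.
Import Order.TTheory GRing.Theory Num.Theory.
Local Open Scope ring_scope.
Set Implicit Arguments. Unset Strict Implicit. Unset Printing Implicit Defensive.

Section S.
Variable F : numClosedFieldType.
Implicit Types (f g : Defs.qpoly F) (x y : F).

Lemma two_neq0 : (2%:R : F) != 0.
Proof. by rewrite pnatr_eq0. Qed.

Definition quad f u1 u2 := c20 f * u1 ^+ 2 + c11 f * u1 * u2 + c02 f * u2 ^+ 2.
Definition cross (a b c : F * F) :=
  (b.1 - a.1) * (c.2 - a.2) - (b.2 - a.2) * (c.1 - a.1).

Lemma taylor f a b x y : qeval f x y =
  qeval f a b + qdx f a b * (x - a) + qdy f a b * (y - b) + quad f (x - a) (y - b).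
Proof. rewrite /qeval /qdx /qdy /quad; ring. Qed.

Lemma dx_shift f a b x y : qdx f x y = qdx f a b + 2%:R * c20 f * (x - a) + c11 f * (y - b).
Proof. rewrite /qdx; ring. Qed.
Lemma dy_shift f a b x y : qdy f x y = qdy f a b + c11 f * (x - a) + 2%:R * c02 f * (y - b).
Proof. rewrite /qdy; ring. Qed.

Lemma det2 (A : 'M[F]_2) : \det A = A 0 0 * A 1 1 - A 0 1 * A 1 0.
Proof.
rewrite (expand_det_row _ 0) !big_ord_recl big_ord0 /cofactor !det_mx11 /= !mxE.
rewrite !expr0 !expr1 addr0 !mul1r mulN1r mulrN.
congr (_ * A _ _ - _ * A _ _).
- by apply: val_inj.
- by apply: val_inj.
- have -> : lift ord0 ord0 = 1 :> 'I_2 by apply: val_inj.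
  by [].
- by apply: val_inj.
- by apply: val_inj.
Qed.
Lemma tr2 (A : 'M[F]_2) : \tr A = A 0 0 + A 1 1.
Proof.
rewrite /mxtrace !big_ord_recl big_ord0 addr0; congr (_ + A _ _); by apply: val_inj.
Qed.

Lemma detJ (v : qvf F) p : \det (vjac v p) =
  qdx (vP v) p.1 p.2 * qdy (vQ v) p.1 p.2 - qdy (vP v) p.1 p.2 * qdx (vQ v) p.1 p.2.
Proof. by rewrite det2 !mxE. Qed.
Lemma trJ (v : qvf F) p : \tr (vjac v p) = qdx (vP v) p.1 p.2 + qdy (vQ v) p.1 p.2.
Proof. by rewrite tr2 !mxE. Qed.

Lemma ker_det (A B C D e1 e2 : F) : A * e1 + B * e2 = 0 -> C * e1 + D * e2 = 0 ->
  e1 != 0 \/ e2 != 0 -> A * D - B * C = 0.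
Proof.
move=> h1 h2 [] nz.
- have : (A * D - B * C) * e1 = D * (A * e1 + B * e2) - B * (C * e1 + D * e2) by ring.
  by rewrite h1 h2 !mulr0 subr0 => /eqP; rewrite mulf_eq0 (negbTE nz) orbF => /eqP.
- have : (A * D - B * C) * e2 = A * (C * e1 + D * e2) - C * (A * e1 + B * e2) by ring.
  by rewrite h1 h2 !mulr0 subr0 => /eqP; rewrite mulf_eq0 (negbTE nz) orbF => /eqP.
Qed.

Lemma pair_neq (a b : F * F) : a != b -> b.1 - a.1 != 0 \/ b.2 - a.2 != 0.
Proof.
case: a b => [a1 a2] [b1 b2] /= H.
case: (eqVneq (b1 - a1) 0) => [/eqP|] h1; last by left.
right; apply: contra H; rewrite subr_eq0 => /eqP h2.
by move: h1; rewrite subr_eq0 => /eqP ->; rewrite h2.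
Qed.


Lemma line_zero f a1 a2 e1 e2 l : qeval f a1 a2 = 0 ->
  qeval f (a1 + e1) (a2 + e2) = 0 -> qeval f (a1 + l * e1) (a2 + l * e2) = 0 ->
  l != 0 -> l != 1 -> qdx f a1 a2 * e1 + qdy f a1 a2 * e2 = 0.
Proof.
move=> h0 h1 h2 l0 l1.
have E : quad f e1 e2 * (l * (1 - l)) =
  l * qeval f (a1 + e1) (a2 + e2) - qeval f (a1 + l * e1) (a2 + l * e2) - (l - 1) * qeval f a1 a2.
  by rewrite /quad /qeval; ring.
rewrite h0 h1 h2 !mulr0 !subr0 in E.
have q0 : quad f e1 e2 = 0.
  move/eqP: E; rewrite !mulf_eq0 (negbTE l0) /= subr_eq0 (eq_sym 1) (negbTE l1) orbF.
  by move/eqP.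
have E2 : qdx f a1 a2 * e1 + qdy f a1 a2 * e2 =
  qeval f (a1 + e1) (a2 + e2) - qeval f a1 a2 - quad f e1 e2.
  by rewrite /quad /qeval /qdx /qdy; ring.
by rewrite E2 h0 h1 q0 !subr0.
Qed.

Lemma col_lambda (e1 e2 w1 w2 : F) : e1 * w2 - e2 * w1 = 0 -> e1 != 0 \/ e2 != 0 ->
  exists l, w1 = l * e1 /\ w2 = l * e2.
Proof.
move=> h; have E : e1 * w2 = e2 * w1 by apply/eqP; rewrite -subr_eq0 h.
case=> nz.
- exists (w1 / e1); split; first by rewrite mulfVK.
  apply: (mulfI nz); rewrite E; field; exact: nz.
- exists (w2 / e2); split; last by rewrite mulfVK.
  apply: (mulfI nz); rewrite -E; field; exact: nz.
Qed.

Lemma noncol f1 f2 (a b c : F * F) :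
  qeval f1 a.1 a.2 = 0 -> qeval f2 a.1 a.2 = 0 ->
  qeval f1 b.1 b.2 = 0 -> qeval f2 b.1 b.2 = 0 ->
  qeval f1 c.1 c.2 = 0 -> qeval f2 c.1 c.2 = 0 ->
  qdx f1 a.1 a.2 * qdy f2 a.1 a.2 - qdy f1 a.1 a.2 * qdx f2 a.1 a.2 != 0 ->
  a != b -> a != c -> b != c -> cross a b c != 0.
Proof.
move=> ha1 ha2 hb1 hb2 hc1 hc2 nd ab ac bc; apply/negP => /eqP hx.
have nze := pair_neq ab.
have [l [l1 l2]] := col_lambda hx nze.
have l0 : l != 0.
  apply: contra ac => /eqP l0; move: l1 l2; rewrite l0 !mul0r.
  case: a c {ha1 ha2 hc1 hc2 nd ab bc hx nze} => [a1 a2] [c1 c2] /=.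
  by move/eqP; rewrite subr_eq0 => /eqP -> /eqP; rewrite subr_eq0 => /eqP ->.
have l1' : l != 1.
  apply: contra bc => /eqP l0'; move: l1 l2; rewrite l0' !mul1r.
  case: a b c {ha1 ha2 hb1 hb2 hc1 hc2 nd ab ac hx nze} => [a1 a2] [b1 b2] [c1 c2] /=.
  by move=> /eqP; rewrite (can_eq (subrK _)) => /eqP -> /eqP;
     rewrite (can_eq (subrK _)) => /eqP ->.
have lz f : qeval f a.1 a.2 = 0 -> qeval f b.1 b.2 = 0 -> qeval f c.1 c.2 = 0 ->
    qdx f a.1 a.2 * (b.1 - a.1) + qdy f a.1 a.2 * (b.2 - a.2) = 0.
  move=> h0 h1 h2; apply: (line_zero (l:=l) h0) => //.
  - by rewrite !subrKC.
  - by rewrite -l1 -l2 !subrKC.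
move/eqP: nd; apply.
by apply: (ker_det (lz _ ha1 hb1 hc1) (lz _ ha2 hb2 hc2)).
Qed.


Lemma affine_zero (k0 k1 k2 : F) (a b c : F * F) : cross a b c != 0 ->
  k0 + k1 * a.1 + k2 * a.2 = 0 -> k0 + k1 * b.1 + k2 * b.2 = 0 ->
  k0 + k1 * c.1 + k2 * c.2 = 0 -> [/\ k0 = 0, k1 = 0 & k2 = 0].
Proof.
move=> nz ha hb hc.
have E1 : cross a b c * k1 = (c.2 - a.2) * ((k0 + k1 * b.1 + k2 * b.2) - (k0 + k1 * a.1 + k2 * a.2))
   - (b.2 - a.2) * ((k0 + k1 * c.1 + k2 * c.2) - (k0 + k1 * a.1 + k2 * a.2)).
  by rewrite /cross; ring.
have E2 : cross a b c * k2 = (b.1 - a.1) * ((k0 + k1 * c.1 + k2 * c.2) - (k0 + k1 * a.1 + k2 * a.2))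
   - (c.1 - a.1) * ((k0 + k1 * b.1 + k2 * b.2) - (k0 + k1 * a.1 + k2 * a.2)).
  by rewrite /cross; ring.
rewrite ha hb hc !subr0 !mulr0 subr0 in E1 E2.
have z1 : k1 = 0 by move/eqP: E1; rewrite mulf_eq0 (negbTE nz) => /eqP.
have z2 : k2 = 0 by move/eqP: E2; rewrite mulf_eq0 (negbTE nz) => /eqP.
split=> //; by move: ha; rewrite z1 z2 !mul0r !addr0.
Qed.

Definition bil f (e1 e2 f1 f2 : F) :=
  2%:R * c20 f * e1 * f1 + c11 f * (e1 * f2 + e2 * f1) + 2%:R * c02 f * e2 * f2.

Lemma quad_decomp f (e1 e2 f1 f2 u1 u2 : F) :
  (e1 * f2 - e2 * f1) ^+ 2 * quad f u1 u2 =
  (u1 * f2 - u2 * f1) ^+ 2 * quad f e1 e2 +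
  (u1 * f2 - u2 * f1) * (e1 * u2 - e2 * u1) * bil f e1 e2 f1 f2 +
  (e1 * u2 - e2 * u1) ^+ 2 * quad f f1 f2.
Proof. rewrite /quad /bil; ring. Qed.

Lemma conic_zero g (a b c d : F * F) :
  cross a b c != 0 -> cross a b d != 0 -> cross a c d != 0 ->
  qeval g a.1 a.2 = 0 -> qeval g b.1 b.2 = 0 -> qeval g c.1 c.2 = 0 ->
  qeval g d.1 d.2 = 0 -> qdx g a.1 a.2 = 0 -> qdy g a.1 a.2 = 0 ->
  g = QPoly 0 0 0 0 0 0.
Proof.
move=> nabc nabd nacd ga gb gc gd gx gy.
have qz (z : F * F) : qeval g z.1 z.2 = 0 -> quad g (z.1 - a.1) (z.2 - a.2) = 0.
  by move=> h; move: h; rewrite (taylor g a.1 a.2) ga gx gy !mul0r !add0r.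
have qb := qz _ gb; have qc := qz _ gc; have qd := qz _ gd.
set e1 := b.1 - a.1 in qb; set e2 := b.2 - a.2 in qb.
set f1 := c.1 - a.1 in qc; set f2 := c.2 - a.2 in qc.
have hd : (e1 * f2 - e2 * f1) != 0 by [].
have bz : bil g e1 e2 f1 f2 = 0.
  have := quad_decomp g e1 e2 f1 f2 (d.1 - a.1) (d.2 - a.2).
  rewrite qb qc qd !mulr0 addr0 add0r => /esym/eqP.
  rewrite !mulf_eq0 => /orP [/orP [] |] //.
  - have -> : (d.1 - a.1) * f2 - (d.2 - a.2) * f1 = - cross a c d by rewrite /cross /f1 /f2; ring.
    by rewrite oppr_eq0 (negbTE nacd).
  - have -> : e1 * (d.2 - a.2) - e2 * (d.1 - a.1) = cross a b d by rewrite /cross /e1 /e2; ring.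
    by rewrite (negbTE nabd).
  - by move/eqP.
have qall u1 u2 : quad g u1 u2 = 0.
  have := quad_decomp g e1 e2 f1 f2 u1 u2.
  rewrite qb qc bz !mulr0 !addr0 => /eqP.
  by rewrite mulf_eq0 expf_eq0 /= (negbTE hd) => /eqP.
have h20 : c20 g = 0 by rewrite -(qall 1 0) /quad; ring.
have h02 : c02 g = 0 by rewrite -(qall 0 1) /quad; ring.
have h11 : c11 g = 0 by rewrite -(qall 1 1) /quad h20 h02; ring.
have h10 : c10 g = 0 by rewrite -gx /qdx h20 h11; ring.
have h01 : c01 g = 0 by rewrite -gy /qdy h02 h11; ring.
have h00 : c00 g = 0 by rewrite -ga /qeval h10 h01 h20 h11 h02; ring.
by case: g ga gb gc gd gx gy qz qb qc qd bz qall h00 h10 h01 h20 h11 h02 => /= ? ? ? ? ? ? *; subst.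
Qed.


Lemma inter (a b c x : F * F) : cross a b x = 0 -> cross a c x = 0 ->
  cross a b c != 0 -> x = a.
Proof.
move=> h1 h2 nz.
have E1 : cross a b c * (x.1 - a.1) = (c.1 - a.1) * cross a b x - (b.1 - a.1) * cross a c x.
  by rewrite /cross; ring.
have E2 : cross a b c * (x.2 - a.2) = (c.2 - a.2) * cross a b x - (b.2 - a.2) * cross a c x.
  by rewrite /cross; ring.
rewrite h1 h2 !mulr0 subr0 in E1 E2.
move/eqP: E1; rewrite mulf_eq0 (negbTE nz) subr_eq0 => /eqP e1.
move/eqP: E2; rewrite mulf_eq0 (negbTE nz) subr_eq0 => /eqP e2.
by case: x a e1 e2 {h1 h2 nz} => ? ? [? ?] /= -> ->.
Qed.

Definition Kf (P Q : Defs.qpoly F) (u1 u2 : F) :=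
  (2%:R * c20 P * u1 + c11 P * u2) * (c11 Q * u1 + 2%:R * c02 Q * u2) -
  (c11 P * u1 + 2%:R * c02 P * u2) * (2%:R * c20 Q * u1 + c11 Q * u2).

Lemma pairK (P Q : Defs.qpoly F) (u1 u2 w1 w2 : F) :
  quad P u1 u2 = quad P w1 w2 -> quad Q u1 u2 = quad Q w1 w2 ->
  u1 - w1 != 0 \/ u2 - w2 != 0 -> u1 + w1 != 0 \/ u2 + w2 != 0 ->
  Kf P Q u1 u2 + Kf P Q w1 w2 = 0.
Proof.
move=> hP hQ nb na.
have dP : 2%:R * (quad P u1 u2 - quad P w1 w2) = 0 by rewrite hP subrr mulr0.
have dQ : 2%:R * (quad Q u1 u2 - quad Q w1 w2) = 0 by rewrite hQ subrr mulr0.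
have Ka : Kf P Q (u1 + w1) (u2 + w2) = 0.
  apply: (ker_det (e1 := u1 - w1) (e2 := u2 - w2)) => //.
  - by rewrite -dP /quad; ring.
  - by rewrite -dQ /quad; ring.
have Kb : Kf P Q (u1 - w1) (u2 - w2) = 0.
  apply: (ker_det (e1 := u1 + w1) (e2 := u2 + w2)) => //.
  - by rewrite -dP /quad; ring.
  - by rewrite -dQ /quad; ring.
have E : 2%:R * (Kf P Q u1 u2 + Kf P Q w1 w2) =
   Kf P Q (u1 + w1) (u2 + w2) + Kf P Q (u1 - w1) (u2 - w2) by rewrite /Kf; ring.
rewrite Ka Kb addr0 in E.
by move/eqP: E; rewrite mulf_eq0 (negbTE two_neq0) => /eqP.
Qed.

Definition qlin (a : F) (P : Defs.qpoly F) (b : F) (Q : Defs.qpoly F) :=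
  QPoly (a * c00 P + b * c00 Q) (a * c10 P + b * c10 Q) (a * c01 P + b * c01 Q)
        (a * c20 P + b * c20 Q) (a * c11 P + b * c11 Q) (a * c02 P + b * c02 Q).
Definition qsub (C D : Defs.qpoly F) :=
  QPoly (c00 C - c00 D) (c10 C - c10 D) (c01 C - c01 D)
        (c20 C - c20 D) (c11 C - c11 D) (c02 C - c02 D).

Lemma qeval_lin a P b Q x y : qeval (qlin a P b Q) x y = a * qeval P x y + b * qeval Q x y.
Proof. rewrite /qeval /=; ring. Qed.
Lemma qdx_lin a P b Q x y : qdx (qlin a P b Q) x y = a * qdx P x y + b * qdx Q x y.
Proof. rewrite /qdx /=; ring. Qed.
Lemma qdy_lin a P b Q x y : qdy (qlin a P b Q) x y = a * qdy P x y + b * qdy Q x y.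
Proof. rewrite /qdy /=; ring. Qed.
Lemma qeval_sub C D x y : qeval (qsub C D) x y = qeval C x y - qeval D x y.
Proof. rewrite /qeval /=; ring. Qed.
Lemma qdx_sub C D x y : qdx (qsub C D) x y = qdx C x y - qdx D x y.
Proof. rewrite /qdx /=; ring. Qed.
Lemma qdy_sub C D x y : qdy (qsub C D) x y = qdy C x y - qdy D x y.
Proof. rewrite /qdy /=; ring. Qed.

Lemma qsub0 C D : qsub C D = QPoly 0 0 0 0 0 0 -> C = D.
Proof.
case: C D => ? ? ? ? ? ? [? ? ? ? ? ?] [] /eqP; rewrite subr_eq0 => /eqP ->.
by do 5! (move/eqP; rewrite subr_eq0 => /eqP ->).
Qed.

Lemma span4 (P Q C : Defs.qpoly F) (p0 p1 p2 p3 : F * F) :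
  (forall z, z \in [:: p0; p1; p2; p3] -> qeval P z.1 z.2 = 0 /\ qeval Q z.1 z.2 = 0) ->
  (forall z, z \in [:: p0; p1; p2; p3] -> qeval C z.1 z.2 = 0) ->
  cross p0 p1 p2 != 0 -> cross p0 p1 p3 != 0 -> cross p0 p2 p3 != 0 ->
  qdx P p0.1 p0.2 * qdy Q p0.1 p0.2 - qdy P p0.1 p0.2 * qdx Q p0.1 p0.2 != 0 ->
  exists a b, C = qlin a P b Q.
Proof.
move=> hPQ hC n12 n13 n23 nd.
set A := qdx P p0.1 p0.2 in nd; set B := qdy P p0.1 p0.2 in nd.
set Cc := qdx Q p0.1 p0.2 in nd; set D := qdy Q p0.1 p0.2 in nd.
set r1 := qdx C p0.1 p0.2; set r2 := qdy C p0.1 p0.2.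
set d := A * D - B * Cc in nd.
exists ((r1 * D - r2 * Cc) / d), ((r2 * A - r1 * B) / d).
apply: qsub0.
have ev z : z \in [:: p0; p1; p2; p3] ->
    qeval (qsub C (qlin ((r1 * D - r2 * Cc) / d) P ((r2 * A - r1 * B) / d) Q)) z.1 z.2 = 0.
  move=> zin; rewrite qeval_sub qeval_lin (hC _ zin).
  by case: (hPQ _ zin) => -> ->; rewrite !mulr0 addr0 subr0.
apply: (conic_zero n12 n13 n23); rewrite ?ev ?inE ?eqxx ?orbT //.
- rewrite qdx_sub qdx_lin -/A -/Cc -/r1 /d; field; exact: nd.
- rewrite qdy_sub qdy_lin -/B -/D -/r2 /d; field; exact: nd.
Qed.


Lemma dep2 (x1 y1 x2 y2 x3 y3 : F) :
  x1 * y2 - x2 * y1 = 0 -> x1 * y3 - x3 * y1 = 0 -> x2 * y3 - x3 * y2 = 0 ->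
  exists al be : F, (al != 0 \/ be != 0) /\
    [/\ al * x1 + be * y1 = 0, al * x2 + be * y2 = 0 & al * x3 + be * y3 = 0].
Proof.
move=> h12 h13 h23.
have nz (a b : F) : (a != 0) || (b != 0) -> b != 0 \/ - a != 0.
  by case/orP=> h; [right; rewrite oppr_eq0 | left].
case: (boolP ((x1 != 0) || (y1 != 0))) => [/nz h1|].
  exists y1, (- x1); split=> //; split.
  - ring.
  - by rewrite -oppr0 -h12; ring.
  - by rewrite -oppr0 -h13; ring.
rewrite negb_or !negbK => /andP [/eqP x10 /eqP y10].
case: (boolP ((x2 != 0) || (y2 != 0))) => [/nz h2|].
  exists y2, (- x2); split=> //; split.
  - by rewrite x10 y10; ring.
  - ring.
  - by rewrite -oppr0 -h23; ring.
rewrite negb_or !negbK => /andP [/eqP x20 /eqP y20].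
case: (boolP ((x3 != 0) || (y3 != 0))) => [/nz h3|].
  exists y3, (- x3); split=> //; split.
  - by rewrite x10 y10; ring.
  - by rewrite x20 y20; ring.
  - ring.
rewrite negb_or !negbK => /andP [/eqP x30 /eqP y30].
exists 1, 0; split; first by left; rewrite oner_eq0.
by rewrite x10 y10 x20 y20 x30 y30; split; ring.
Qed.

Lemma solve3 (a1 a2 a3 b1 b2 b3 c1 c2 c3 : F) :
  a1 * (b2 * c3 - b3 * c2) + a2 * (b3 * c1 - b1 * c3) + a3 * (b1 * c2 - b2 * c1) = 0 ->
  [\/ b2 * c3 - b3 * c2 != 0, b3 * c1 - b1 * c3 != 0 | b1 * c2 - b2 * c1 != 0] ->
  exists al be : F, [/\ a1 = al * b1 + be * c1, a2 = al * b2 + be * c2 & a3 = al * b3 + be * c3].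
Proof.
move=> h [] nz.
- exists ((a2 * c3 - a3 * c2) / (b2 * c3 - b3 * c2)), ((b2 * a3 - b3 * a2) / (b2 * c3 - b3 * c2)).
  split; try by field.
  apply: (mulfI nz); rewrite -[LHS]subr0 -h; field; exact: nz.
- exists ((a3 * c1 - a1 * c3) / (b3 * c1 - b1 * c3)), ((b3 * a1 - b1 * a3) / (b3 * c1 - b1 * c3)).
  split; try by field.
  apply: (mulfI nz); rewrite -[LHS]subr0 -h; field; exact: nz.
- exists ((a1 * c2 - a2 * c1) / (b1 * c2 - b2 * c1)), ((b1 * a2 - b2 * a1) / (b1 * c2 - b2 * c1)).
  split; try by field.
  apply: (mulfI nz); rewrite -[LHS]subr0 -h; field; exact: nz.
Qed.


Lemma caseA (P Q : Defs.qpoly F) (p0 p1 p2 : F * F) :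
  c11 Q = - (2%:R * c20 P) -> c02 Q = - c11 P / 2%:R ->
  (2%:R * c20 Q) * (2%:R * c02 P) - c11 P * c11 Q = 0 ->
  c11 P * c11 P - (2%:R * c20 P) * (2%:R * c02 P) = 0 ->
  (2%:R * c20 P) * c11 Q - (2%:R * c20 Q) * c11 P = 0 ->
  (forall z, z \in [:: p0; p1; p2] -> qeval P z.1 z.2 = 0 /\ qeval Q z.1 z.2 = 0) ->
  cross p0 p1 p2 != 0 ->
  qdx P p0.1 p0.2 * qdy Q p0.1 p0.2 - qdy P p0.1 p0.2 * qdx Q p0.1 p0.2 != 0 -> False.
Proof.
move=> e11 e02 X1 X2 X3 hz ncol nd.
have t2 := two_neq0.
have Y3 : c20 P * c11 Q - c11 P * c20 Q = 0.
  have E : 2%:R * (c20 P * c11 Q - c11 P * c20 Q) =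
     (2%:R * c20 P) * c11 Q - (2%:R * c20 Q) * c11 P by ring.
  by move/eqP: E; rewrite X3 mulf_eq0 (negbTE t2) => /eqP.
have Y2 : c20 P * c02 Q - c02 P * c20 Q = 0.
  have E : 2%:R * 2%:R * (c20 P * c02 Q - c02 P * c20 Q) =
     - ((2%:R * c20 Q) * (2%:R * c02 P) - c11 P * c11 Q).
    by rewrite e11 e02; field.
  by move/eqP: E; rewrite X1 oppr0 !mulf_eq0 (negbTE t2) => /eqP.
have Y1 : c11 P * c02 Q - c02 P * c11 Q = 0.
  have E : 2%:R * (c11 P * c02 Q - c02 P * c11 Q) =
     - (c11 P * c11 P - (2%:R * c20 P) * (2%:R * c02 P)).
    by rewrite e11 e02; field.
  by move/eqP: E; rewrite X2 oppr0 !mulf_eq0 (negbTE t2) => /eqP.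
have [al [be [nab [d1 d2 d3]]]] := dep2 Y3 Y2 Y1.
set R := qlin al P be Q.
have r20 : c20 R = 0 by rewrite /R /= d1.
have r11 : c11 R = 0 by rewrite /R /= d2.
have r02 : c02 R = 0 by rewrite /R /= d3.
have Rz z : z \in [:: p0; p1; p2] -> c00 R + c10 R * z.1 + c01 R * z.2 = 0.
  move=> zin; case: (hz _ zin) => h1 h2.
  have : qeval R z.1 z.2 = 0 by rewrite qeval_lin h1 h2 !mulr0 addr0.
  by rewrite /qeval r20 r11 r02 !mul0r !addr0.
have i1 : p1 \in [:: p0; p1; p2] by rewrite !inE eqxx !orbT.
have i2 : p2 \in [:: p0; p1; p2] by rewrite !inE eqxx !orbT.
have [_ h10 h01] := affine_zero ncol (Rz _ (mem_head _ _)) (Rz p1 i1) (Rz p2 i2).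
have kx : qdx P p0.1 p0.2 * al + qdx Q p0.1 p0.2 * be = 0.
  have : qdx R p0.1 p0.2 = 0 by rewrite /qdx h10 r20 r11 !mulr0 !mul0r !addr0.
  by rewrite qdx_lin mulrC (mulrC be).
have ky : qdy P p0.1 p0.2 * al + qdy Q p0.1 p0.2 * be = 0.
  have : qdy R p0.1 p0.2 = 0 by rewrite /qdy h01 r11 r02 !mulr0 !mul0r !addr0.
  by rewrite qdy_lin mulrC (mulrC be).
move/eqP: nd; apply.
by rewrite (mulrC (qdy P _ _)); apply: (ker_det kx ky).
Qed.


Definition detf (P Q : Defs.qpoly F) x y := qdx P x y * qdy Q x y - qdy P x y * qdx Q x y.

Lemma caseB (P Q : Defs.qpoly F) (p0 p1 p2 : F * F) (al be : F) :
  c10 P + c01 Q = 0 -> 2%:R * c20 P + c11 Q = 0 -> c11 P + 2%:R * c02 Q = 0 ->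
  c10 P = al * (2%:R * c20 P) + be * c11 P ->
  c10 Q = al * (2%:R * c20 Q) + be * c11 Q ->
  c01 P = al * c11 P + be * (2%:R * c02 P) ->
  (forall z, z \in [:: p0; p1; p2] -> qeval P z.1 z.2 = 0 /\ qeval Q z.1 z.2 = 0) ->
  p0 != p1 -> p0 != p2 -> p1 != p2 ->
  detf P Q p0.1 p0.2 + detf P Q p1.1 p1.2 != 0 ->
  detf P Q p0.1 p0.2 + detf P Q p2.1 p2.2 != 0 -> False.
Proof.
move=> H0 H1 H2 v1 v2 v3 hz n01 n02 n12 ne1 ne2.
have gxP : qdx P (- al) (- be) = 0 by rewrite /qdx v1; ring.
have gxQ : qdx Q (- al) (- be) = 0 by rewrite /qdx v2; ring.
have gyP : qdy P (- al) (- be) = 0 by rewrite /qdy v3; ring.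
have gyQ : qdy Q (- al) (- be) = 0.
  have E : qdy Q (- al) (- be) + qdx P (- al) (- be) =
    (c10 P + c01 Q) + (2%:R * c20 P + c11 Q) * (- al) + (c11 P + 2%:R * c02 Q) * (- be).
    by rewrite /qdy /qdx; ring.
  by move: E; rewrite H0 H1 H2 gxP !mul0r !addr0.
have qv f z : qdx f (- al) (- be) = 0 -> qdy f (- al) (- be) = 0 -> qeval f z.1 z.2 = 0 ->
    quad f (z.1 + al) (z.2 + be) = - qeval f (- al) (- be).
  move=> h1 h2 h3; have := taylor f (- al) (- be) z.1 z.2.
  rewrite h3 h1 h2 !mul0r !addr0 !opprK => E.
  by apply/eqP; rewrite -addr_eq0 addrC -E.
have dk z : detf P Q z.1 z.2 = Kf P Q (z.1 + al) (z.2 + be).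
  rewrite /detf (dx_shift P (- al) (- be)) (dx_shift Q (- al) (- be)).
  rewrite (dy_shift P (- al) (- be)) (dy_shift Q (- al) (- be)) gxP gxQ gyP gyQ /Kf.
  by rewrite !opprK !add0r.
have in0 : p0 \in [:: p0; p1; p2] by rewrite !inE eqxx.
have in1 : p1 \in [:: p0; p1; p2] by rewrite !inE eqxx !orbT.
have in2 : p2 \in [:: p0; p1; p2] by rewrite !inE eqxx !orbT.
have pr (a b : F * F) : a \in [:: p0; p1; p2] -> b \in [:: p0; p1; p2] -> b != a ->
   (a.1 + al + (b.1 + al) != 0 \/ a.2 + be + (b.2 + be) != 0) ->
   detf P Q a.1 a.2 + detf P Q b.1 b.2 = 0.
  move=> ain bin ba hs; rewrite !dk.
  case: (hz _ ain) (hz _ bin) => ha1 ha2 [hb1 hb2].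
  apply: pairK => //.
  - by rewrite (qv _ _ gxP gyP ha1) (qv _ _ gxP gyP hb1).
  - by rewrite (qv _ _ gxQ gyQ ha2) (qv _ _ gxQ gyQ hb2).
  - have [h|h] := pair_neq ba; [left|right]; apply: contra h => /eqP h;
      by rewrite -h; apply/eqP; ring.
case: (boolP ((p0.1 + al + (p1.1 + al) == 0) && (p0.2 + be + (p1.2 + be) == 0))).
- case/andP => /eqP s1 /eqP s2.
  move/eqP: ne2; apply; apply: pr => //; first by rewrite eq_sym.
  have [h|h] := pair_neq n12; [left|right]; apply: contra h => /eqP h; apply/eqP.
  + have E : p2.1 - p1.1 = (p0.1 + al + (p2.1 + al)) - (p0.1 + al + (p1.1 + al)) by ring.
    by rewrite E h s1 subr0.
  + have E : p2.2 - p1.2 = (p0.2 + be + (p2.2 + be)) - (p0.2 + be + (p1.2 + be)) by ring.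
    by rewrite E h s2 subr0.
- rewrite negb_and => hs.
  move/eqP: ne1; apply; apply: pr => //; first by rewrite eq_sym.
  by case/orP: hs; [left|right].
Qed.


Lemma det3_zero (a1 a2 a3 b1 b2 b3 c1 c2 c3 n1 n2 n3 : F) :
  n1 * a1 + n2 * a2 + n3 * a3 = 0 -> n1 * b1 + n2 * b2 + n3 * b3 = 0 ->
  n1 * c1 + n2 * c2 + n3 * c3 = 0 -> [|| n1 != 0, n2 != 0 | n3 != 0] ->
  a1 * (b2 * c3 - b3 * c2) + a2 * (b3 * c1 - b1 * c3) + a3 * (b1 * c2 - b2 * c1) = 0.
Proof.
move=> ha hb hc nz.
set D := a1 * (b2 * c3 - b3 * c2) + a2 * (b3 * c1 - b1 * c3) + a3 * (b1 * c2 - b2 * c1).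
have E1 : D * n1 = (n1 * a1 + n2 * a2 + n3 * a3) * (b2 * c3 - b3 * c2)
   + (n1 * b1 + n2 * b2 + n3 * b3) * (c2 * a3 - c3 * a2)
   + (n1 * c1 + n2 * c2 + n3 * c3) * (a2 * b3 - a3 * b2) by rewrite /D; ring.
have E2 : D * n2 = (n1 * a1 + n2 * a2 + n3 * a3) * (b3 * c1 - b1 * c3)
   + (n1 * b1 + n2 * b2 + n3 * b3) * (c3 * a1 - c1 * a3)
   + (n1 * c1 + n2 * c2 + n3 * c3) * (a3 * b1 - a1 * b3) by rewrite /D; ring.
have E3 : D * n3 = (n1 * a1 + n2 * a2 + n3 * a3) * (b1 * c2 - b2 * c1)
   + (n1 * b1 + n2 * b2 + n3 * b3) * (c1 * a2 - c2 * a1)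
   + (n1 * c1 + n2 * c2 + n3 * c3) * (a1 * b2 - a2 * b1) by rewrite /D; ring.
rewrite ha hb hc !mul0r !addr0 in E1 E2 E3.
case/or3P: nz => nz.
- by move/eqP: E1; rewrite mulf_eq0 (negbTE nz) orbF => /eqP.
- by move/eqP: E2; rewrite mulf_eq0 (negbTE nz) orbF => /eqP.
- by move/eqP: E3; rewrite mulf_eq0 (negbTE nz) orbF => /eqP.
Qed.

Lemma key (P Q : Defs.qpoly F) (p0 p1 p2 : F * F) (n1 n2 n3 : F) :
  c10 P + c01 Q = 0 -> 2%:R * c20 P + c11 Q = 0 -> c11 P + 2%:R * c02 Q = 0 ->
  (forall z, z \in [:: p0; p1; p2] -> qeval P z.1 z.2 = 0 /\ qeval Q z.1 z.2 = 0) ->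
  cross p0 p1 p2 != 0 -> detf P Q p0.1 p0.2 != 0 ->
  p0 != p1 -> p0 != p2 -> p1 != p2 ->
  detf P Q p0.1 p0.2 + detf P Q p1.1 p1.2 != 0 ->
  detf P Q p0.1 p0.2 + detf P Q p2.1 p2.2 != 0 ->
  n1 * c10 P + n2 * c10 Q + n3 * c01 P = 0 ->
  n1 * (2%:R * c20 P) + n2 * (2%:R * c20 Q) + n3 * c11 P = 0 ->
  n1 * c11 P + n2 * c11 Q + n3 * (2%:R * c02 P) = 0 ->
  [/\ n1 = 0, n2 = 0 & n3 = 0].
Proof.
move=> H0 H1 H2 hz ncol nd n01 n02 n12 ne1 ne2 k0 k1 k2.
case: (boolP [|| n1 != 0, n2 != 0 | n3 != 0]); last first.
  by rewrite !negb_or !negbK => /and3P [/eqP -> /eqP -> /eqP ->].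
move=> nz; exfalso.
have D0 := det3_zero k0 k1 k2 nz.
case: (boolP [|| (2%:R * c20 Q) * (2%:R * c02 P) - c11 P * c11 Q != 0,
   c11 P * c11 P - (2%:R * c20 P) * (2%:R * c02 P) != 0 |
   (2%:R * c20 P) * c11 Q - (2%:R * c20 Q) * c11 P != 0]) => hX.
- have [al [be [v1 v2 v3]]] := solve3 D0 (or3P hX).
  exact: (caseB H0 H1 H2 v1 v2 v3 hz n01 n02 n12 ne1 ne2).
- move: hX; rewrite !negb_or !negbK => /and3P [/eqP X1 /eqP X2 /eqP X3].
  have e11 : c11 Q = - (2%:R * c20 P).
    by apply/eqP; rewrite -addr_eq0 addrC H1.
  have e02 : c02 Q = - c11 P / 2%:R.
    by rewrite -[c11 P](addrK (2%:R * c02 Q)) H2; field.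
  exact: (caseA e11 e02 X1 X2 X3 hz ncol nd).
Qed.


Lemma ham_rel (v : qvf F) : hamiltonian v ->
  [/\ c10 (vP v) + c01 (vQ v) = 0, 2%:R * c20 (vP v) + c11 (vQ v) = 0 &
      c11 (vP v) + 2%:R * c02 (vQ v) = 0].
Proof.
move=> h; have h00 := h 0 0; have h10 := h 1 0; have h01 := h 0 1.
split.
- by rewrite -h00 /qdx /qdy; ring.
- have E : 2%:R * c20 (vP v) + c11 (vQ v) =
    (qdx (vP v) 1 0 + qdy (vQ v) 1 0) - (qdx (vP v) 0 0 + qdy (vQ v) 0 0) by rewrite /qdx /qdy; ring.
  by rewrite E h00 h10 subr0.
- have E : c11 (vP v) + 2%:R * c02 (vQ v) =
    (qdx (vP v) 0 1 + qdy (vQ v) 0 1) - (qdx (vP v) 0 0 + qdy (vQ v) 0 0) by rewrite /qdx /qdy; ring.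
  by rewrite E h00 h01 subr0.
Qed.

Lemma qlin_opp1 (P Q : Defs.qpoly F) : qlin (-1) P 0 Q = qopp P.
Proof. by case: P Q => ? ? ? ? ? ? [? ? ? ? ? ?]; rewrite /qlin /qopp /=; congr QPoly; ring. Qed.
Lemma qlin_opp2 (P Q : Defs.qpoly F) : qlin 0 P (-1) Q = qopp Q.
Proof. by case: P Q => ? ? ? ? ? ? [? ? ? ? ? ?]; rewrite /qlin /qopp /=; congr QPoly; ring. Qed.
Lemma qlin_id1 (P Q : Defs.qpoly F) : qlin 1 P 0 Q = P.
Proof. by case: P Q => ? ? ? ? ? ? [? ? ? ? ? ?]; rewrite /qlin /=; congr QPoly; ring. Qed.
Lemma qlin_id2 (P Q : Defs.qpoly F) : qlin 0 P 1 Q = Q.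
Proof. by case: P Q => ? ? ? ? ? ? [? ? ? ? ? ?]; rewrite /qlin /=; congr QPoly; ring. Qed.

Lemma qeval_opp f x y : qeval (qopp f) x y = - qeval f x y.
Proof. rewrite /qeval /=; ring. Qed.
Lemma qdx_opp f x y : qdx (qopp f) x y = - qdx f x y.
Proof. rewrite /qdx /=; ring. Qed.
Lemma qdy_opp f x y : qdy (qopp f) x y = - qdy f x y.
Proof. rewrite /qdy /=; ring. Qed.

Lemma self_opp (x : F) : x = - x -> x = 0.
Proof.
move=> h; have : 2%:R * x = 0 by rewrite mulr2n mulrDl mul1r {2}h subrr.
by move/eqP; rewrite mulf_eq0 (negbTE two_neq0) => /eqP.
Qed.

Definition pencil (a b c d : F * F) : Defs.qpoly F :=
  let l0 := (b.2 - a.2) * a.1 - (b.1 - a.1) * a.2 in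
  let l1 := - (b.2 - a.2) in let l2 := b.1 - a.1 in
  let m0 := (d.2 - c.2) * c.1 - (d.1 - c.1) * c.2 in
  let m1 := - (d.2 - c.2) in let m2 := d.1 - c.1 in
  QPoly (l0 * m0) (l0 * m1 + l1 * m0) (l0 * m2 + l2 * m0) (l1 * m1) (l1 * m2 + l2 * m1) (l2 * m2).

Lemma qeval_pencil a b c d (z : F * F) :
  qeval (pencil a b c d) z.1 z.2 = cross a b z * cross c d z.
Proof. rewrite /qeval /pencil /cross /=; ring. Qed.

Lemma crossC (a b z : F * F) : cross a b z = - cross b a z.
Proof. rewrite /cross; ring. Qed.

End S.

Unset Implicit Arguments.
Theorem theorem5p1 (F : numClosedFieldType) (v : qvf F) (p : 'I_4 -> F * F) :
  hamiltonian v ->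
  injective p ->
  (forall j, sing_pt v (p j)) ->
  (forall j, nondeg_pt v (p j)) ->
  (forall j k : 'I_4, j != k -> \det (vjac v (p j)) + \det (vjac v (p k)) != 0) ->
  forall w : qvf F, twin_vf v w <-> w = qvf_opp v.
Proof.
case: v => P Q ham inj sing nd ne w.
have /= [H0 H1 H2] := ham_rel ham.
have dist (i j : 'I_4) : i != j -> p i != p j.
  by move=> ij; apply: contra ij => /eqP /inj ->.
have hz z : z \in [:: p 0; p 1; p 2; p 3] -> qeval P z.1 z.2 = 0 /\ qeval Q z.1 z.2 = 0.
  by rewrite !inE => /or4P [] /eqP ->; exact: sing.
have hz3 z : z \in [:: p 0; p 1; p 2] -> qeval P z.1 z.2 = 0 /\ qeval Q z.1 z.2 = 0.
  by move=> zin; apply: hz; move: zin; rewrite !inE => /or3P [] ->; rewrite ?orbT.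
have nd' j : detf P Q (p j).1 (p j).2 != 0.
  by have := nd j; rewrite /nondeg_pt detJ.
have ne' (j k : 'I_4) : j != k -> detf P Q (p j).1 (p j).2 + detf P Q (p k).1 (p k).2 != 0.
  by move=> jk; have := ne j k jk; rewrite !detJ.
have NC (i j k : 'I_4) : i != j -> i != k -> j != k -> cross (p i) (p j) (p k) != 0.
  move=> ij ik jk.
  case: (sing i) (sing j) (sing k) => /= a1 a2 [b1 b2] [c1 c2].
  exact: (noncol a1 a2 b1 b2 c1 c2 (nd' i) (dist _ _ ij) (dist _ _ ik) (dist _ _ jk)).
have c012 : cross (p 0) (p 1) (p 2) != 0 by apply: NC.
have c013 : cross (p 0) (p 1) (p 3) != 0 by apply: NC.
have c023 : cross (p 0) (p 2) (p 3) != 0 by apply: NC.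
have SP C : (forall z, z \in [:: p 0; p 1; p 2; p 3] -> qeval C z.1 z.2 = 0) ->
    exists a b, C = qlin a P b Q.
  by move=> hC; apply: (span4 hz hC c012 c013 c023 (nd' 0)).
split.
- case: w => Pw Qw [wne _ _ ss td].
  have wz z : z \in [:: p 0; p 1; p 2; p 3] -> qeval Pw z.1 z.2 = 0 /\ qeval Qw z.1 z.2 = 0.
    by move=> zin; apply/(ss z); exact: hz.
  have [a [b ePw]] := SP Pw (fun z zin => (wz z zin).1).
  have [c [d eQw]] := SP Qw (fun z zin => (wz z zin).2).
  subst Pw Qw.
  have ht j : a * qdx P (p j).1 (p j).2 + b * qdx Q (p j).1 (p j).2 +
      c * qdy P (p j).1 (p j).2 + d * qdy Q (p j).1 (p j).2 = 0.
    have [t _] := td _ (sing j).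
    move: t; rewrite !trJ /= qdx_lin qdy_lin (ham (p j).1 (p j).2) => ->; ring.
  have dd : a * d - b * c = 1.
    have [_ t] := td _ (sing 0).
    move: t; rewrite !detJ /= !qdx_lin !qdy_lin => /eqP; rewrite eq_sym -subr_eq0 => /eqP t.
    have E : (a * d - b * c - 1) * detf P Q (p 0).1 (p 0).2 = 0.
      by rewrite -t /detf; ring.
    move/eqP: E; rewrite mulf_eq0 (negbTE (nd' 0)) orbF subr_eq0 => /eqP //.
  pose k0 := a * c10 P + b * c10 Q + c * c01 P + d * c01 Q.
  pose k1 := a * (2%:R * c20 P) + b * (2%:R * c20 Q) + c * c11 P + d * c11 Q.
  pose k2 := a * c11 P + b * c11 Q + c * (2%:R * c02 P) + d * (2%:R * c02 Q).
  have hk j : k0 + k1 * (p j).1 + k2 * (p j).2 = 0.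
    by rewrite -(ht j) /k0 /k1 /k2 /qdx /qdy; ring.
  have [z0 z1 z2] := affine_zero c012 (hk 0) (hk 1) (hk 2).
  have [ead eb ec] : [/\ a - d = 0, b = 0 & c = 0].
    apply: (key H0 H1 H2 hz3 c012 (nd' 0) (dist 0 1 isT) (dist 0 2 isT) (dist 1 2 isT)
             (ne' 0 1 isT) (ne' 0 2 isT)).
    + have E : (a - d) * c10 P + b * c10 Q + c * c01 P = k0 - d * (c10 P + c01 Q).
        by rewrite /k0; ring.
      by rewrite E z0 H0 mulr0 subr0.
    + have E : (a - d) * (2%:R * c20 P) + b * (2%:R * c20 Q) + c * c11 P =
          k1 - d * (2%:R * c20 P + c11 Q) by rewrite /k1; ring.
      by rewrite E z1 H1 mulr0 subr0.
    + have E : (a - d) * c11 P + b * c11 Q + c * (2%:R * c02 P) =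
          k2 - d * (c11 P + 2%:R * c02 Q) by rewrite /k2; ring.
      by rewrite E z2 H2 mulr0 subr0.
  have eda : d = a by apply/eqP; rewrite eq_sym -subr_eq0 ead.
  subst d b c.
  have : (a - 1) * (a + 1) = 0 by rewrite -[RHS](subrr 1) -[X in _ = X - _]dd; ring.
  move/eqP; rewrite mulf_eq0 subr_eq0 addr_eq0 => /orP [] /eqP ea; subst a.
  + by exfalso; apply: wne; rewrite qlin_id1 qlin_id2.
  + by rewrite qlin_opp1 qlin_opp2.
- move=> ->.
  have oppE z : sing_pt (QVF P Q) z <-> sing_pt (qvf_opp (QVF P Q)) z.
    rewrite /sing_pt /= !qeval_opp; split.
      by case=> -> ->; rewrite oppr0.
    case=> /eqP h1 /eqP h2; move: h1 h2; rewrite !oppr_eq0 => /eqP h1 /eqP h2.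
    by split.
  have iso : forall z, sing_pt (QVF P Q) z <-> z \in [:: p 0; p 1; p 2; p 3].
    move=> z; split; last by move/hz.
    case=> /= zP zQ.
    have pz a b c d : (forall z, z \in [:: p 0; p 1; p 2; p 3] ->
        qeval (pencil a b c d) z.1 z.2 = 0) -> cross a b z * cross c d z = 0.
      move=> hC; have [al [be eC]] := SP _ hC.
      by rewrite -qeval_pencil eC qeval_lin zP zQ !mulr0 addr0.
    have v1 : cross (p 0) (p 1) z * cross (p 2) (p 3) z = 0.
      by apply: pz => y; rewrite !inE => /or4P [] /eqP ->; rewrite qeval_pencil /cross; ring.
    have v2 : cross (p 0) (p 2) z * cross (p 1) (p 3) z = 0.
      by apply: pz => y; rewrite !inE => /or4P [] /eqP ->; rewrite qeval_pencil /cross; ring.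
    move/eqP: v1; rewrite mulf_eq0 => /orP [] /eqP v1;
    move/eqP: v2; rewrite mulf_eq0 => /orP [] /eqP v2.
    + by rewrite (inter v1 v2 c012) !inE eqxx.
    + have -> : z = p 1.
        apply: (inter (a := p 1) (b := p 0) (c := p 3)) => //; last by apply: NC.
        by rewrite crossC v1 oppr0.
      by rewrite !inE eqxx !orbT.
    + have -> : z = p 2.
        apply: (inter (a := p 2) (b := p 3) (c := p 0)) => //; last by apply: NC.
        by rewrite crossC v2 oppr0.
      by rewrite !inE eqxx !orbT.
    + have -> : z = p 3.
        apply: (inter (a := p 3) (b := p 2) (c := p 1)); last by apply: NC.
        - by rewrite crossC v1 oppr0.
        - by rewrite crossC v2 oppr0.
      by rewrite !inE eqxx !orbT.
  split.
  + move=> E; have eP : P = qopp P := congr1 (@vP F) E.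
    have e10 : c10 P = 0 by apply: self_opp; rewrite {1}eP.
    have e20 : c20 P = 0 by apply: self_opp; rewrite {1}eP.
    have e11 : c11 P = 0 by apply: self_opp; rewrite {1}eP.
    have e01 : c01 P = 0 by apply: self_opp; rewrite {1}eP.
    have e02 : c02 P = 0 by apply: self_opp; rewrite {1}eP.
    move: (nd' 0); rewrite /detf /qdx /qdy e10 e20 e11 e01 e02 => /eqP H; apply: H; ring.
  + by exists [:: p 0; p 1; p 2; p 3].
  + exists [:: p 0; p 1; p 2; p 3] => z; rewrite -oppE; exact: iso.
  + exact: oppE.
  + move=> z _; rewrite !trJ !detJ /= !qdx_opp !qdy_opp; split.
    * by rewrite -opprD ham oppr0.
    * ring.
Qed.
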